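(* Let $d_1,d_2,r\in\mathbb{N}_+$ and let $\mathcal{X}=\{\boldsymbol a_i\boldsymbol b_j^T:(i,j)\in[d_1]\times[d_2]\}$, where $\boldsymbol a_i\in\mathbb{R}^{d_1}$ and $\boldsymbol b_j\in\mathbb{R}^{d_2}$ are the standard basis vectors. Represent a function $f:\mathcal{X}\to[-1,1]$ by the matrix $\boldsymbol\Theta=[\![f(\boldsymbol a_i\boldsymbol b_j^T)]\!]\in[-1,1]^{d_1\times d_2}$. If $f$ is globally rank-$r$ sign representable, then $\max_{\pi\in[-1,1]}\mathrm{srank}(\boldsymbol\Theta-\pi)\le r+1$. Conversely, if $\max_{\pi\in[-1,1]}\mathrm{srank}(\boldsymbol\Theta-\pi)\le r$, then the function $f$ defined by $f(\boldsymbol a_i\boldsymbol b_j^T)=\Theta_{ij}$ is globally rank-$r$ sign representable.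
   Context: Sign convention: $\mathrm{sgn}(x)=1$ if $x>0$ and $\mathrm{sgn}(x)=-1$ otherwise; applied to matrices entrywise. For a matrix $\boldsymbol\Theta$ and scalar $\pi$, $\boldsymbol\Theta-\pi$ means subtracting $\pi$ from every entry. Sign rank: $\mathrm{srank}(\boldsymbol\Theta)=\min\{\mathrm{rank}(\boldsymbol\Theta'):\boldsymbol\Theta'\in\mathbb{R}^{d_1\times d_2},\ \mathrm{sgn}(\boldsymbol\Theta')=\mathrm{sgn}(\boldsymbol\Theta)\}$. A function $f:\mathcal{X}\to[-1,1]$ on $\mathcal{X}\subset\mathbb{R}^{d_1\times d_2}$ is $(r,\pi)$-sign representable if there exist a matrix $\boldsymbol B\in\mathbb{R}^{d_1\times d_2}$ of rank at most $r$ and $b\in\mathbb{R}$ with $\mathrm{sgn}(f(\boldsymbol X)-\pi)=\mathrm{sgn}(\langle\boldsymbol X,\boldsymbol B\rangle+b)$ for all $\boldsymbol X\in\mathcal{X}$, where $\langle\boldsymbol X,\boldsymbol B\rangle=\mathrm{tr}(\boldsymbol X\boldsymbol B^T)$; it is globally rank-$r$ sign representable if it is $(r,\pi)$-sign representable for every $\pi\in[-1,1]$. *)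

(* Defs.v *)
From mathcomp Require Import all_boot all_order all_algebra.
From mathcomp Require Import boolp reals.
Set Implicit Arguments. Unset Strict Implicit. Unset Printing Implicit Defensive.
Import Order.TTheory GRing.Theory Num.Theory.
Local Open Scope ring_scope.

Section SignRank.
Variable R : realType.

Definition sgn (x : R) : R := if 0 < x then 1 else -1.

Definition sgn_mx m n (A : 'M[R]_(m, n)) : 'M[R]_(m, n) := map_mx sgn A.

Definition mx_subc m n (A : 'M[R]_(m, n)) (pi : R) : 'M[R]_(m, n) :=
  A - const_mx pi.

Definition srank_ranks m n (A : 'M[R]_(m, n)) : pred nat :=
  fun k => `[< exists B : 'M[R]_(m, n), sgn_mx B = sgn_mx A /\ \rank B = k >].

Lemma srank_ranks_ex m n (A : 'M[R]_(m, n)) : exists k, srank_ranks A k.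
Proof. by exists (\rank A); apply/asboolP; exists A. Qed.

Definition srank m n (A : 'M[R]_(m, n)) : nat := ex_minn (srank_ranks_ex A).

Definition mx_inner m n (X B : 'M[R]_(m, n)) : R := \tr (X *m B^T).

Definition sign_representable m n (Xs : 'M[R]_(m, n) -> Prop)
    (f : 'M[R]_(m, n) -> R) (r : nat) (pi : R) : Prop :=
  exists (B : 'M[R]_(m, n)) (b : R), (\rank B <= r)%N /\
    forall X, Xs X -> sgn (f X - pi) = sgn (mx_inner X B + b).

Definition globally_sign_representable m n (Xs : 'M[R]_(m, n) -> Prop)
    (f : 'M[R]_(m, n) -> R) (r : nat) : Prop :=
  forall pi : R, -1 <= pi <= 1 -> sign_representable Xs f r pi.

Definition std_basis m (i : 'I_m) : 'cV[R]_m := delta_mx i 0.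

Definition rank_one_basis m n : 'M[R]_(m, n) -> Prop :=
  fun X => exists (i : 'I_m) (j : 'I_n), X = std_basis i *m (std_basis j)^T.

End SignRank.

(* Main.v *)
Require Import Defs.
From mathcomp Require Import all_boot all_order all_algebra.
From mathcomp Require Import boolp reals.
Import Order.TTheory GRing.Theory Num.Theory.
Local Open Scope ring_scope.

Lemma inner_delta (R : realType) m n (i : 'I_m) (j : 'I_n) (B : 'M[R]_(m, n)) :
  mx_inner (std_basis R i *m (std_basis R j)^T) B = B i j.
Proof.
rewrite /mx_inner /std_basis trmx_delta mul_delta_mx /mxtrace.
rewrite (bigD1 i) //= big1 ?addr0.
  rewrite mxE (bigD1 j) //= big1 ?addr0.
    by rewrite !mxE !eqxx mul1r.
  by move=> k nk; rewrite !mxE (negbTE nk) andbF mul0r.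
move=> k nk; rewrite mxE big1 // => l _; rewrite !mxE.
by rewrite (negbTE nk) mul0r.
Qed.

Lemma rank_addD (R : realType) m n (A B : 'M[R]_(m, n)) :
  (\rank (A + B)%R <= \rank A + \rank B)%N.
Proof.
apply: leq_trans (mxrankS (addmx_sub_adds (submx_refl A) (submx_refl B))) _.
exact: mxrank_adds_leqif.
Qed.

Lemma rank_const (R : realType) m n (b : R) :
  (\rank (const_mx b : 'M[R]_(m, n)) <= 1)%N.
Proof.
have -> : (const_mx b : 'M[R]_(m, n)) =
    (const_mx 1 : 'M[R]_(m, 1)) *m (const_mx b : 'M[R]_(1, n)).
  by apply/matrixP => x y; rewrite !mxE big_ord1 !mxE mul1r.
exact: mulmx_max_rank.
Qed.

Lemma srank_le (R : realType) m n (A B : 'M[R]_(m, n)) :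
  sgn_mx B = sgn_mx A -> (srank A <= \rank B)%N.
Proof.
move=> h; rewrite /srank; case: ex_minnP => k _ hmin.
by apply: hmin; apply/asboolP; exists B.
Qed.

Lemma srank_wit (R : realType) m n (A : 'M[R]_(m, n)) :
  exists B : 'M[R]_(m, n), sgn_mx B = sgn_mx A /\ \rank B = srank A.
Proof.
rewrite /srank; case: ex_minnP => k hk _.
by move/asboolP: hk.
Qed.

Theorem proposition1 (R : realType) (d1 d2 r : nat)
    (hd1 : (0 < d1)%N) (hd2 : (0 < d2)%N) (hr : (0 < r)%N)
    (Theta : 'M[R]_(d1, d2)) (f : 'M[R]_(d1, d2) -> R)
    (hTheta : forall i j, -1 <= Theta i j <= 1)
    (hf : forall i j, f (@std_basis R d1 i *m (@std_basis R d2 j)^T) = Theta i j) :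
  (globally_sign_representable (@rank_one_basis R d1 d2) f r ->
     forall pi : R, -1 <= pi <= 1 -> (srank (mx_subc Theta pi) <= r.+1)%N)
  /\
  ((forall pi : R, -1 <= pi <= 1 -> (srank (mx_subc Theta pi) <= r)%N) ->
     globally_sign_representable (@rank_one_basis R d1 d2) f r).
Proof.
split.
  move=> hg pi hpi; have [B [b [hB hs]]] := hg pi hpi.
  apply: leq_trans (@srank_le R d1 d2 _ (B + const_mx b) _) _.
    apply/matrixP => i j; rewrite !mxE.
    have := hs _ (ex_intro _ i (ex_intro _ j erefl)).
    by rewrite hf inner_delta => ->.
  apply: leq_trans (@rank_addD R d1 d2 B (const_mx b)) _.
  by rewrite -addn1 leq_add // rank_const.
move=> hs pi hpi; have [B [hB hr']] := @srank_wit R d1 d2 (mx_subc Theta pi).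
exists B, 0; split; first by rewrite hr' hs.
move=> X [i [j ->]]; rewrite hf inner_delta addr0.
have := congr1 (fun M : 'M[R]_(d1, d2) => M i j) hB; rewrite !mxE => ->.
by [].
Qed.
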